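(* Let $r\ge 3$, $s_r \ge \cdots \ge s_1 \ge 1$, and $m,n\ge 1$ be integers. Then $$Z(m,n,s_1,\ldots,s_r) \le \frac{(s_2+\cdots+s_r-r+1)^{1/s_1}}{r-1}\, m\, n^{\,r-1-\frac{1}{s_1\cdots s_{r-1}}} + (s_1-1)\binom{n}{r-1}.$$
   Context: An $r$-graph is a set of $r$-element subsets (edges) of a finite vertex set. An $m$ by $n$ semibipartite $r$-graph is an $r$-graph $\mathcal{H}$ with vertex set partitioned into $V_1,V_2$, $|V_1|=m$, $|V_2|=n$, such that every edge contains exactly one vertex of $V_1$. $K^r_{s_1,\ldots,s_r}$ is the complete $r$-partite $r$-graph with parts $W_1,\ldots,W_r$ of sizes $s_1,\ldots,s_r$ (edges: all $r$-sets with exactly one vertex in each part). An ordered copy of $K^r_{s_1,\ldots,s_r}$ in such $\mathcal{H}$ is a copy in which $W_1\subseteq V_1$ and $W_2,\ldots,W_r\subseteq V_2$. $Z(m,n,s_1,\ldots,s_r)$ is the maximum number of edges in an $m$ by $n$ semibipartite $r$-graph with no ordered copy of $K^r_{s_1,\ldots,s_r}$. *)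

(* Defs.v *)
From mathcomp Require Import all_boot.
From Stdlib Require Import Reals ClassicalEpsilon.
Set Implicit Arguments. Unset Strict Implicit. Unset Printing Implicit Defensive.

Definition vtx (m n : nat) : finType := ('I_m + 'I_n)%type.

Definition in_V1 m n (x : vtx m n) : bool := if x is inl _ then true else false.
Definition in_V2 m n (x : vtx m n) : bool := if x is inr _ then true else false.

Definition is_rgraph m n (r : nat) (H : {set {set vtx m n}}) : Prop :=
  forall e, e \in H -> #|e| = r.

Definition semibipartite m n (H : {set {set vtx m n}}) : Prop :=
  forall e, e \in H -> #|[set x in e | in_V1 x]| = 1.

(* Ordered copy of K^r_{s_1,...,s_r} (parts indexed 1..r; s i = s_i):
   pairwise disjoint parts W_1 ⊆ V_1, W_2..W_r ⊆ V_2, |W_i| = s_i, and every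
   r-set with exactly one vertex in each part is an edge of H. *)
Definition has_ordered_copy m n (r : nat) (s : nat -> nat)
    (H : {set {set vtx m n}}) : Prop :=
  exists W : nat -> {set vtx m n},
    [/\ forall i, 1 <= i <= r -> #|W i| = s i,
        W 1 \subset [set x | in_V1 x],
        forall i, 2 <= i <= r -> W i \subset [set x | in_V2 x],
        forall i j, 1 <= i <= r -> 1 <= j <= r -> i != j -> [disjoint W i & W j]
      & forall f : nat -> vtx m n, (forall i, 1 <= i <= r -> f i \in W i) ->
          [set f (val i).+1 | i : 'I_r] \in H].

Definition pb (P : Prop) : bool := if excluded_middle_informative P then true else false.

Definition Zfree m n r (s : nat -> nat) (H : {set {set vtx m n}}) : bool :=
  pb (is_rgraph r H /\ semibipartite H /\ ~ has_ordered_copy r s H).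

Definition Zmax (m n r : nat) (s : nat -> nat) : nat :=
  \max_(H : {set {set vtx m n}} | Zfree r s H) #|H|.

(* Main.v *)
Require Import Defs.
From mathcomp Require Import all_boot.
From mathcomp Require Import zify.
Set Implicit Arguments. Unset Strict Implicit. Unset Printing Implicit Defensive.

Lemma ffact_ge (d s : nat) : (d - s) ^ s.+1 <= d ^_ s.+1.
Proof.
elim: s d => [|s IH] d; first by rewrite subn0 expn1 ffactn1.
rewrite ffactnS expnS.
have e : d - s.+1 = d.-1 - s by lia.
rewrite e; apply: leq_mul; last exact: IH.
lia.
Qed.

Lemma ffact_le_exp n m : n ^_ m <= n ^ m.
Proof.
elim: m => [|m IH]; first by rewrite ffactn0 expn0.
rewrite ffactnSr expnSr; apply: leq_mul => //; exact: leq_subr.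
Qed.

Lemma cheb (J : finType) (A : pred J) (y : J -> nat) e :
  (\sum_(j in A) y j ^ e) * (\sum_(j in A) y j) <= #|A| * \sum_(j in A) y j ^ e.+1.
Proof.
have key : forall i j, y i ^ e * y j + y j ^ e * y i <= y i ^ e.+1 + y j ^ e.+1.
  move=> i j; rewrite !expnSr.
  wlog h : i j / y i <= y j.
    move=> W; case: (leqP (y i) (y j)) => h; first exact: W.
    rewrite addnC (addnC (y i ^ e * y i)); apply: W; exact: ltnW.
  have h2 : y i ^ e <= y j ^ e.
    by case: (e) => [|e']; [rewrite !expn0 | rewrite leq_exp2r].
  nia.
set S1 := \sum_(i in A) \sum_(j in A) y i ^ e * y j.
have E1 : (\sum_(j in A) y j ^ e) * (\sum_(j in A) y j) = S1.
  by rewrite big_distrl; apply: eq_bigr => i _; rewrite big_distrr.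
have E2 : S1 = \sum_(i in A) \sum_(j in A) y j ^ e * y i by rewrite /S1 exchange_big.
have E3 : \sum_(i in A) \sum_(j in A) (y i ^ e * y j + y j ^ e * y i) = S1 + S1.
  by rewrite {2}E2 -big_split; apply: eq_bigr => i _; rewrite -big_split.
have E4 : \sum_(i in A) \sum_(j in A) (y i ^ e.+1 + y j ^ e.+1) =
   #|A| * \sum_(j in A) y j ^ e.+1 + #|A| * \sum_(j in A) y j ^ e.+1.
  rewrite (eq_bigr (fun i => #|A| * y i ^ e.+1 + \sum_(j in A) y j ^ e.+1)).
    by rewrite big_split /= sum_nat_const -big_distrr.
  by move=> i _; rewrite big_split /= sum_nat_const.
have : S1 + S1 <= #|A| * \sum_(j in A) y j ^ e.+1 + #|A| * \sum_(j in A) y j ^ e.+1.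
  rewrite -E3 -E4; apply: leq_sum => i _; apply: leq_sum => j _; exact: key.
rewrite E1; lia.
Qed.

Lemma powmean (J : finType) (A : pred J) (y : J -> nat) s :
  (\sum_(j in A) y j) ^ s.+1 <= #|A| ^ s * \sum_(j in A) y j ^ s.+1.
Proof.
elim: s => [|s IH].
  by rewrite expn0 mul1n expn1; apply: leq_sum => j _; rewrite expn1.
rewrite expnSr (expnSr #|A|) -mulnA.
apply: leq_trans (leq_mul IH (leqnn _)) _.
rewrite -mulnA; apply: leq_mul => //; exact: cheb.
Qed.

Lemma jensen (J : finType) (A : pred J) (d : J -> nat) s : 0 < s ->
  (\sum_(j in A) d j - (s - 1) * #|A|) ^ s <= #|A| ^ (s - 1) * s`! * \sum_(j in A) 'C(d j, s).
Proof.
case: s => [//|s] _; rewrite subSS subn0.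
have h1 : \sum_(j in A) d j - s * #|A| <= \sum_(j in A) (d j - s).
  have : \sum_(j in A) d j <= \sum_(j in A) ((d j - s) + s).
    by apply: leq_sum => j _; lia.
  rewrite big_split /= sum_nat_const; lia.
apply: leq_trans (_ : (\sum_(j in A) (d j - s)) ^ s.+1 <= _).
  by rewrite leq_exp2r.
apply: leq_trans (powmean _ _ _) _.
rewrite -mulnA leq_mul2l big_distrr /=; apply/orP; right.
apply: leq_sum => j _; rewrite mulnC bin_ffact; exact: ffact_ge.
Qed.

Lemma exists_sub (T : finType) (A : {set T}) k : k <= #|A| ->
  exists B : {set T}, B \subset A /\ #|B| = k.
Proof.
elim: k => [|k IH] h; first by exists set0; rewrite sub0set cards0.
have [B [sBA cB]] := IH (ltnW h).
have : 0 < #|A :\: B| by rewrite cardsDS // cB subn_gt0.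
rewrite card_gt0 => /set0Pn [x]; rewrite inE => /andP [xB xA].
exists (x |: B); split; first by rewrite subUset sub1set xA.
by rewrite cardsU1 xB cB.
Qed.

Lemma card_fst (I J : finType) (D : {set I * J}) :
  #|D| = \sum_(j : J) #|[set i | (i, j) \in D]|.
Proof.
rewrite -sum1_card big_mkcond /=.
pose F := fun i j => if (i, j) \in D then 1 else 0.
transitivity (\sum_p F p.1 p.2); first by apply: eq_bigr => -[i j] _.
rewrite -(pair_bigA _ F) /= exchange_big /=; apply: eq_bigr => j _.
by apply: esym; rewrite -sum1_card big_mkcond /=; apply: eq_bigr => i _; rewrite inE.
Qed.

Lemma card_snd (I J : finType) (D : {set I * J}) :
  #|D| = \sum_(i : I) #|[set j | (i, j) \in D]|.
Proof.
rewrite -sum1_card big_mkcond /=.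
pose F := fun i j => if (i, j) \in D then 1 else 0.
transitivity (\sum_p F p.1 p.2); first by apply: eq_bigr => -[i j] _.
rewrite -(pair_bigA _ F) /=; apply: eq_bigr => i _.
by apply: esym; rewrite -sum1_card big_mkcond /=; apply: eq_bigr => j _; rewrite inE.
Qed.

Definition Nb m n (E : {set 'I_m * {set 'I_n}}) (T : {set 'I_n}) : {set 'I_m} :=
  [set v | (v, T) \in E].
Definition LS m n (E : {set 'I_m * {set 'I_n}}) (S : {set 'I_m}) : {set {set 'I_n}} :=
  [set T | [forall v in S, (v, T) \in E]].

Lemma count_main m n k s1 (E : {set 'I_m * {set 'I_n}}) : 0 < s1 ->
  (forall p, p \in E -> #|p.2| = k) ->
  (#|E| - (s1 - 1) * 'C(n, k)) ^ s1 <=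
    'C(n, k) ^ (s1 - 1) * s1`! * \sum_(S : {set 'I_m} | #|S| == s1) #|LS E S|.
Proof.
move=> s1p hE.
pose A := [pred T : {set 'I_n} | #|T| == k].
have c1 : #|E| = \sum_(T in A) #|Nb E T|.
  rewrite card_fst [RHS]big_mkcond /=; apply: eq_bigr => T _.
  case: ifP => // hT; apply/eqP; rewrite cards_eq0; apply/eqP/setP => v.
  rewrite !inE; apply/negbTE/negP => /hE /= hc; by rewrite inE hc eqxx in hT.
have c2 : #|A| = 'C(n, k).
  by have := card_draws ('I_n) k; rewrite card_ord => <-; rewrite cardsE.
pose D := [set p : {set 'I_m} * {set 'I_n} |
             [&& #|p.1| == s1, p.1 \subset Nb E p.2 & #|p.2| == k]].
have c3 : \sum_(T in A) 'C(#|Nb E T|, s1) = \sum_(S : {set 'I_m} | #|S| == s1) #|LS E S|.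
  transitivity #|D|.
    rewrite card_fst big_mkcond /=; apply: eq_bigr => T _.
    rewrite -cards_draws; case: ifP => hT.
      by apply: eq_card => S; rewrite !inE; rewrite inE in hT; rewrite hT andbT andbC.
    apply/esym/eqP; rewrite cards_eq0; apply/eqP/setP => S.
    by rewrite !inE; rewrite inE in hT; rewrite hT !andbF.
  rewrite card_snd [RHS]big_mkcond /=; apply: eq_bigr => S _.
  case: ifP => hS.
    apply: eq_card => T; rewrite !inE hS /=.
    apply/andP/forallP.
      case=> /subsetP sub _ v; apply/implyP => vS; have := sub v vS; by rewrite inE.
    move=> hall; split.
      apply/subsetP => v vS; rewrite inE; exact: (implyP (hall v) vS).
    have : 0 < #|S| by rewrite (eqP hS).
    rewrite card_gt0 => /set0Pn [v vS].
    by have := hE _ (implyP (hall v) vS) => /= ->.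
  apply/eqP; rewrite cards_eq0; apply/eqP/setP => T.
  by rewrite !inE hS.
rewrite c1 -c2 -c3; exact: jensen.
Qed.

Lemma disjP (T : finType) (A B : {set T}) :
  reflect (forall x, x \in A -> x \in B -> False) [disjoint A & B].
Proof.
rewrite -setI_eq0; apply: (iffP eqP) => [h x xa xb | h].
  have : x \in A :&: B by rewrite inE xa xb.
  by rewrite h inE.
apply/setP => x; rewrite !inE; apply/negP => /andP [xa xb]; exact: h xa xb.
Qed.

Lemma split_tr (T : finType) (g : nat -> T) k :
  [set g (val i) | i : 'I_k.+1] = g 0 |: [set g (val i).+1 | i : 'I_k].
Proof.
apply/setP => x; rewrite !inE; apply/imsetP/orP.
  case=> -[[|j] hj] _ -> /=; first by left.
  by right; apply/imsetP; exists (Ordinal (hj : j < k)).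
case=> [/eqP -> | /imsetP [i _ ->]]; first by exists ord0.
by exists (Ordinal (ltn_ord i : (val i).+1 < k.+1)).
Qed.

Definition copyL n k (s : nat -> nat) (L : {set {set 'I_n}}) : Prop :=
  exists U : nat -> {set 'I_n},
    [/\ forall i, 2 <= i <= k.+1 -> #|U i| = s i,
        forall i j, 2 <= i <= k.+1 -> 2 <= j <= k.+1 -> i != j -> [disjoint U i & U j]
      & forall f : nat -> 'I_n, (forall i, 2 <= i <= k.+1 -> f i \in U i) ->
          [set f (val i).+2 | i : 'I_k] \in L].

Lemma key1_nat n (s : nat -> nat) (L : {set {set 'I_n}}) :
  (forall T, T \in L -> #|T| = 1) -> ~ copyL 1 s L -> #|L| <= s 2 - 1.
Proof.
move=> hL nc; rewrite leqNgt; apply/negP => hlt.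
pose A := [set x | [set x] \in L].
have eA : L = [set [set x] | x in A].
  apply/setP => T; apply/idP/imsetP.
    move=> TL; have /cards1P [x eT] : #|T| == 1 by rewrite hL.
    by exists x; rewrite // inE -eT.
  by case=> x; rewrite inE => xL ->.
have cA : #|A| = #|L| by rewrite eA card_imset //; exact: set1_inj.
have [U2 [sU cU]] : exists U2 : {set 'I_n}, U2 \subset A /\ #|U2| = s 2.
  by apply: exists_sub; lia.
apply: nc; exists (fun _ => U2); split.
- move=> i hi; have -> : i = 2 by lia.
  exact: cU.
- move=> i j hi hj; have -> : i = 2 by lia.
  have -> : j = 2 by lia.
  by [].
- move=> f hf.
  have -> : [set f (val i).+2 | i : 'I_1] = [set f 2].
    apply/setP => x; rewrite in_set1; apply/imsetP/eqP => [[i _ ->]|->].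
      by rewrite (ord1 i).
    by exists ord0.
  have := subsetP sU _ (hf 2 (leqnn _)); by rewrite inE.
Qed.

Definition EL n (L : {set {set 'I_n}}) : {set 'I_n * {set 'I_n}} :=
  [set p : 'I_n * {set 'I_n} | (p.1 \notin p.2) && (p.1 |: p.2 \in L)].

Lemma EL_card2 n k (L : {set {set 'I_n}}) : (forall T, T \in L -> #|T| = k.+1) ->
  forall p, p \in EL L -> #|p.2| = k.
Proof.
move=> hL [x T]; rewrite inE /= => /andP [xT xL].
by have := hL _ xL; rewrite cardsU1 xT add1n => -[].
Qed.

Lemma EL_card n k (L : {set {set 'I_n}}) : (forall T, T \in L -> #|T| = k.+1) ->
  #|EL L| = k.+1 * #|L|.
Proof.
move=> hL.
pose F := [set p : 'I_n * {set 'I_n} | (p.1 \in p.2) && (p.2 \in L)].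
pose phi := fun p : 'I_n * {set 'I_n} => (p.1, p.1 |: p.2).
have inj : {in EL L &, injective phi}.
  move=> [x T] [y T']; rewrite !inE /= => /andP [xT _] /andP [yT _] [exy eT].
  subst y; congr (_, _).
  by rewrite -(setU1K xT) eT setU1K.
have eF : [set phi p | p in EL L] = F.
  apply/setP => -[x T]; rewrite inE /=; apply/imsetP/andP.
    case=> -[y T']; rewrite inE /= => /andP [yT yL] [-> ->].
    by rewrite setU11.
  case=> xT TL; exists (x, T :\ x); last by rewrite /phi /= setD1K.
  by rewrite inE /= setD11 setD1K.
rewrite -(card_in_imset inj) eF card_fst.
rewrite (eq_bigr (fun T => if T \in L then k.+1 else 0)).
  by rewrite -big_mkcond /= sum_nat_const mulnC.
move=> T _; case: ifP => TL.
  by rewrite -(hL _ TL); apply: eq_card => x; rewrite !inE TL andbT.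
apply/eqP; rewrite cards_eq0; apply/eqP/setP => x; by rewrite !inE TL andbF.
Qed.

Lemma EL_nocopy n k (s : nat -> nat) (L : {set {set 'I_n}}) :
  (forall i, 2 <= i <= k.+2 -> 1 <= s i) ->
  ~ copyL k.+1 s L ->
  ~ (exists S : {set 'I_n}, #|S| = s 2 /\ copyL k (fun i => s i.+1) (LS (EL L) S)).
Proof.
move=> hs nc [S [cS [U [cU dU tU]]]].
have aux : forall j, 2 <= j <= k.+1 -> [disjoint S & U j].
  move=> j hj; apply/disjP => x xS xU.
  pose g := fun i => if i == j then x else odflt x [pick y in U i].
  have hg : forall i, 2 <= i <= k.+1 -> g i \in U i.
    move=> i hi; rewrite /g; case: eqP => [->|_] //.
    case: pickP => [y /= -> //|h].
    have : 0 < #|U i| by rewrite cU //; apply: hs; lia.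
    by rewrite card_gt0 => /set0Pn [y]; rewrite h.
  have := tU g hg; rewrite inE => /forallP /(_ x) /implyP /(_ xS).
  rewrite inE /= => /andP [/negP nx _]; apply: nx.
  have hj2 : j - 2 < k by lia.
  apply/imsetP; exists (Ordinal hj2) => //=.
  have -> : (j - 2).+2 = j by lia.
  by rewrite /g eqxx.
apply: nc.
exists (fun i => if i == 2 then S else U i.-1); split.
- move=> i hi; case: eqP => [->|ne] //.
  have e : i = i.-1.+1 by lia.
  rewrite {2}e; apply: cU; lia.
- move=> i j hi hj nij.
  case: eqP => [ei|nei]; case: eqP => [ej|nej].
  + by subst; rewrite eqxx in nij.
  + apply: aux; lia.
  + rewrite disjoint_sym; apply: aux; lia.
  + apply: dU; lia.
- move=> f hf.
  have f2 : f 2 \in S by have := hf 2 (isT : 2 <= 2 <= k.+2).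
  have hg : forall i, 2 <= i <= k.+1 -> (fun i => f i.+1) i \in U i.
    move=> i hi /=; have := hf i.+1 ltac:(lia).
    by have -> : (i.+1 == 2) = false by lia.
  have := tU _ hg; rewrite inE => /forallP /(_ (f 2)) /implyP /(_ f2).
  rewrite inE /= => /andP [_ hL].
  by rewrite (split_tr (fun j => f j.+2)).
Qed.

Definition emb m n (p : 'I_m * {set 'I_n}) : {set vtx m n} :=
  (inl p.1 : vtx m n) |: [set (inr x : vtx m n) | x in p.2].

Lemma inr_inj m n : injective (@inr 'I_m 'I_n).
Proof. by move=> a b [].
Qed.
Lemma inl_inj m n : injective (@inl 'I_m 'I_n).
Proof. by move=> a b [].
Qed.

Lemma emb_inr m n (p : 'I_m * {set 'I_n}) x : ((inr x : vtx m n) \in emb p) = (x \in p.2).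
Proof.
rewrite !inE (mem_imset _ _ (@inr_inj m n)) orb_idl //.
Qed.

Lemma emb_inl m n (p : 'I_m * {set 'I_n}) v : ((inl v : vtx m n) \in emb p) = (v == p.1).
Proof.
rewrite !inE; apply/orP/eqP => [[/eqP [->] //|/imsetP [x _ //]] | ->]; by left.
Qed.

Lemma emb_card m n (p : 'I_m * {set 'I_n}) : #|emb p| = #|p.2|.+1.
Proof.
rewrite /emb cardsU1 card_imset; last exact: inr_inj.
by have -> : (inl p.1 : vtx m n) \notin [set (inr x : vtx m n) | x in p.2]
  by apply/imsetP => -[].
Qed.

Lemma emb_inj m n : injective (@emb m n).
Proof.
move=> [v T] [w T'] e.
have : (inl v : vtx m n) \in emb (w, T') by rewrite -e emb_inl.
rewrite emb_inl /= => /eqP ev; subst w; congr (_, _).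
apply/setP => x; by rewrite -(emb_inr (v, T)) e emb_inr.
Qed.

Definition EH m n (H : {set {set vtx m n}}) : {set 'I_m * {set 'I_n}} :=
  [set p | emb p \in H].

Lemma EH_card m n (H : {set {set vtx m n}}) :
  semibipartite H -> #|EH H| = #|H|.
Proof.
move=> hsb.
rewrite -(card_imset _ (@emb_inj m n)).
suff -> : [set emb x | x in EH H] = H by [].

apply/setP => e; apply/imsetP/idP => [[p] | eH].
  by rewrite inE => h ->.
have /cards1P [x0 ex0] : #|[set x in e | in_V1 x]| == 1 by rewrite hsb.
have : x0 \in [set x in e | in_V1 x] by rewrite ex0 set11.
rewrite inE; case: x0 ex0 => [v|y] ex0 /andP [ve hv]; last by [].
have ep : emb (v, [set y | (inr y : vtx m n) \in e]) = e.
  apply/setP => -[w|y]; last by rewrite emb_inr /= inE.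
  rewrite emb_inl /=; have := ex0; move/setP/(_ (inl w)); rewrite !inE /= andbT => ->.
  by apply/eqP/eqP => [->|[]].
exists (v, [set y | (inr y : vtx m n) \in e]).
  by rewrite /EH inE ep.
by rewrite ep.
Qed.

Lemma EH_card2 m n k (H : {set {set vtx m n}}) : is_rgraph k.+1 H ->
  forall p, p \in EH H -> #|p.2| = k.
Proof. by move=> hr p; rewrite /EH inE => /hr; rewrite emb_card => -[].
Qed.

Lemma EH_nocopy m n k (s : nat -> nat) (H : {set {set vtx m n}}) : 0 < n ->
  ~ has_ordered_copy k.+1 s H ->
  ~ (exists S : {set 'I_m}, #|S| = s 1 /\ copyL k s (LS (EH H) S)).
Proof.
move=> n0 nc [S [cS [U [cU dU tU]]]]; apply: nc.
exists (fun i => if i == 1 then [set (inl v : vtx m n) | v in S]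
                 else [set (inr x : vtx m n) | x in U i]); split.
- move=> i hi; case: eqP => [->|ne].
    by rewrite card_imset ?cS //; exact: inl_inj.
  rewrite card_imset; [apply: cU; lia | exact: inr_inj].
- by apply/subsetP => x /imsetP [v _ ->]; rewrite inE.
- move=> i hi; have -> : (i == 1) = false by lia.
  by apply/subsetP => x /imsetP [y _ ->]; rewrite inE.
- move=> i j hi hj nij; apply/disjP => x.
  case: eqP => [ei|nei]; case: eqP => [ej|nej].
  + by subst; rewrite eqxx in nij.
  + by move=> /imsetP [v _ ->] /imsetP [y _].
  + by move=> /imsetP [y _ ->] /imsetP [v _].
  + move=> /imsetP [y yU ->] /imsetP [z zU /inr_inj eyz]; subst z.
    have hd := dU i j ltac:(lia) ltac:(lia) nij.
    exact: (elimT (disjP _ _) hd y yU zU).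
- move=> f hf.
  have [v vS f1] : exists2 v, v \in S & f 1 = inl v.
    by have := hf 1 ltac:(lia); rewrite eqxx => /imsetP [v vS ->]; exists v.
  pose y0 : 'I_n := Ordinal n0.
  pose g := fun i => if f i is inr y then y else y0.
  have fg : forall i, 2 <= i <= k.+1 -> f i = inr (g i) /\ g i \in U i.
    move=> i hi; have := hf i ltac:(lia); have -> : (i == 1) = false by lia.
    by move=> /imsetP [y yU ey]; rewrite /g ey.
  have hg : forall i, 2 <= i <= k.+1 -> g i \in U i by move=> i /fg [].
  have := tU g hg; rewrite inE => /forallP /(_ v) /implyP /(_ vS).
  rewrite /EH inE.
  suff -> : [set f (val i).+1 | i : 'I_k.+1] = emb (v, [set g (val i).+2 | i : 'I_k]) by [].
  rewrite (split_tr (fun j => f j.+1)) /emb /= f1; congr (_ |: _).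
  rewrite -imset_comp; apply: eq_imset => i /=.
  have hi : 2 <= i.+2 <= k.+1 by have := ltn_ord i; lia.
  by have [-> _] := fg _ hi.
Qed.

From Stdlib Require Import Reals Lra Lia ClassicalEpsilon.
From mathcomp Require Import zify.

Section RealPart.
Local Open Scope R_scope.

Lemma INR_muln a b : INR (muln a b) = INR a * INR b.
Proof. exact: mult_INR. Qed.
Lemma INR_addn a b : INR (addn a b) = INR a + INR b.
Proof. exact: plus_INR. Qed.
Lemma INR_expn a e : INR (expn a e) = INR a ^ e.
Proof. elim: e => [|e IH]; first by rewrite expn0.
by rewrite expnS INR_muln IH.
Qed.
Lemma INR_leq a b : leq a b -> INR a <= INR b.
Proof. by move/leP; apply: le_INR. Qed.
Lemma INR_subn a b : leq b a -> INR (subn a b) = INR a - INR b.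
Proof. by move/leP => h; rewrite -minus_INR. Qed.
Lemma INR_ge1 a : leq 1 a -> 1 <= INR a.
Proof. by move/INR_leq. Qed.

Definition rt (x : R) (s : nat) : R := if Rle_dec x 0 then 0 else Rpower x (1 / INR s).

Lemma rt_ge0 x s : 0 <= rt x s.
Proof. rewrite /rt; destruct (Rle_dec x 0); simpl; [lra | left; exact: exp_pos]. Qed.

Lemma rt_le_Rpower x s : 0 <= rt x s <= Rpower x (1 / INR s).
Proof.
split; first exact: rt_ge0.
rewrite /rt; destruct (Rle_dec x 0); simpl; [left; exact: exp_pos | lra].
Qed.

Lemma rt_pow x s : 0 < x -> (0 < s)%nat -> rt x s ^ s = x.
Proof.
move=> hx hs; rewrite /rt; destruct (Rle_dec _ 0) as [h|h]; simpl; first lra.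
rewrite -Rpower_pow; last exact: exp_pos.
rewrite Rpower_mult.
have -> : 1 / INR s * INR s = 1.
  have : 0 < INR s by apply: lt_0_INR; apply/ltP.
  move=> ?; field; lra.
exact: Rpower_1.
Qed.

Lemma rt_div_le (a : nat) s kk : (0 < s)%nat -> 1 <= kk -> rt (INR a) s / kk <= INR a.
Proof.
move=> hs hk; rewrite /rt; destruct (Rle_dec _ 0) as [h|h]; simpl.
  rewrite /Rdiv Rmult_0_l; exact: pos_INR.
have ha : 1 <= INR a.
  apply: INR_ge1; case: a h => [|a] h //=; exfalso; apply: h; simpl; lra.
have hle : Rpower (INR a) (1 / INR s) <= INR a.
  rewrite -{2}(Rpower_1 (INR a)); last lra.
  apply: Rle_Rpower => //.
  have : 1 <= INR s by apply: INR_ge1.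
  move=> h1; rewrite /Rdiv Rmult_1_l; rewrite -Rinv_1; apply: Rinv_le_contravar; lra.
have hp : 0 < Rpower (INR a) (1 / INR s) by exact: exp_pos.
apply: Rle_trans hle.
rewrite /Rdiv; rewrite -{2}(Rmult_1_r (Rpower _ _)).
apply: Rmult_le_compat_l; first lra.
rewrite -Rinv_1; apply: Rinv_le_contravar; lra.
Qed.

Lemma pow_lt_strict x y n : 0 <= x < y -> x ^ n.+1 < y ^ n.+1.
Proof.
move=> [h0 h1]; elim: n => [|n IH]; first by simpl; lra.
have hy : 0 <= x ^ n.+1 by apply: pow_le.
rewrite /= in IH hy *; nra.
Qed.

Lemma pow_le_inv x y n : 0 <= x -> 0 <= y -> x ^ n.+1 <= y ^ n.+1 -> x <= y.
Proof.
move=> hx hy h; case: (Rle_lt_dec x y) => // hlt.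
have := pow_lt_strict n (conj hy hlt); lra.
Qed.

Lemma real_step (a N M n S Q : R) (k s : nat) :
  0 <= a -> 0 <= N -> 1 <= M -> 1 <= n -> 0 <= S -> 1 <= Q -> (0 < k)%nat -> (0 < s)%nat ->
  a ^ s <= N ^ (s - 1) * (M ^ s * (S / INR k * Rpower n (INR k - 1 / Q))) ->
  INR k * N <= n ^ k ->
  a <= rt S s / INR k * M * Rpower n (INR k - 1 / (INR s * Q)).
Proof.
move=> ha hN hM hn hS hQ hk0 hs h1 h2.
case: s hs h1 => [//|s'] _ h1.
rewrite subSS subn0 in h1.
have hk : 1 <= INR k by apply: INR_ge1.
have hsR : 1 <= INR s'.+1 by apply: INR_ge1.
set kk := INR k in hk h1 h2 *.
set R1 := Rpower n (kk - 1 / Q) in h1.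
set R2 := Rpower n (kk - 1 / (INR s'.+1 * Q)).
have R1p : 0 < R1 by exact: exp_pos.
have R2p : 0 < R2 by exact: exp_pos.
have key : (n ^ k) ^ s' * R1 = R2 ^ s'.+1.
  rewrite -!Rpower_pow; try lra; last exact: exp_pos.
  rewrite /R1 /R2 !Rpower_mult -Rpower_plus; congr Rpower.
  have := pos_INR s'; rewrite S_INR /kk => ?.
  field; split; lra.
have claim : (kk * a) ^ s'.+1 <= S * (M * R2) ^ s'.+1.
  rewrite Rpow_mult_distr Rpow_mult_distr -key.
  have e1 : kk ^ s'.+1 * (N ^ s' * (M ^ s'.+1 * (S / kk * R1))) =
            (kk * N) ^ s' * (S * M ^ s'.+1 * R1).
    rewrite Rpow_mult_distr /=; field; lra.
  apply: Rle_trans (_ : kk ^ s'.+1 * (N ^ s' * (M ^ s'.+1 * (S / kk * R1))) <= _).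
    apply: Rmult_le_compat_l => //; apply: pow_le; lra.
  rewrite e1.
  have hM' : 0 <= M ^ s'.+1 by apply: pow_le; lra.
  have hkn : (kk * N) ^ s' <= (n ^ k) ^ s' by apply: pow_incr; split => //; nra.
  have hSM : 0 <= S * M ^ s'.+1 * R1 by apply: Rmult_le_pos; [nra | lra].
  nra.
destruct (Rle_dec S 0) as [hS0|hS0].
  have eS : S = 0 by lra.
  rewrite eS Rmult_0_l in claim.
  have : kk * a <= 0.
    apply: (@pow_le_inv _ _ s') => //; first nra; first lra.
    by rewrite pow_i; [lra | apply/ltP].
  move=> hka; rewrite /rt eS; destruct (Rle_dec 0 0); simpl; last lra.
  have : a <= 0 by nra.
  lra.
have hS' : 0 < S by lra.
have ht := rt_pow hS' (isT : (0 < s'.+1)%nat).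
have ht0 := rt_ge0 S s'.+1.
rewrite -ht -Rpow_mult_distr in claim.
have p1 : 0 <= kk * a by apply: Rmult_le_pos; lra.
have p2 : 0 <= rt S s'.+1 * (M * R2) by apply: Rmult_le_pos => //; apply: Rmult_le_pos; lra.
have hh := pow_le_inv p1 p2 claim.
have -> : rt S s'.+1 / kk * M * R2 = (rt S s'.+1 * (M * R2)) / kk by field; lra.
apply: (Rmult_le_reg_l kk); first lra.
have -> : kk * (rt S s'.+1 * (M * R2) / kk) = rt S s'.+1 * (M * R2) by field; lra.
exact: hh.
Qed.

End RealPart.


Definition MainP k := forall m n (s : nat -> nat) (E : {set 'I_m * {set 'I_n}}),
  (0 < m)%nat -> (0 < n)%nat -> (forall i, (1 <= i <= k.+1)%nat -> (0 < s i)%nat) ->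
  (forall p, p \in E -> #|p.2| = k) ->
  ~ (exists S : {set 'I_m}, #|S| = s 1%nat /\ copyL k s (LS E S)) ->
  (INR #|E| <= rt (INR (\sum_(2 <= i < k.+2) s i + 1 - k.+1)%nat) (s 1%nat) / INR k * INR m
      * Rpower (INR n) (INR k - 1 / INR (\prod_(1 <= i < k.+1) s i)%nat)
    + INR (s 1%nat - 1)%nat * INR 'C(n, k))%R.

Definition KeyP k := forall n (s : nat -> nat) (L : {set {set 'I_n}}),
  (0 < n)%nat -> (forall i, (1 <= i <= k.+1)%nat -> (0 < s i)%nat) ->
  (forall T, T \in L -> #|T| = k) -> ~ copyL k s L ->
  (INR #|L| <= INR (\sum_(2 <= i < k.+2) s i + 1 - k.+1)%nat / INR k
      * Rpower (INR n) (INR k - 1 / INR (\prod_(2 <= i < k.+1) s i)%nat))%R.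

Lemma key1 : KeyP 1.
Proof.
move=> n s L n0 hs hL nc; have h := key1_nat hL nc.
rewrite big_nat1 big_geq //.
have -> : (s 2 + 1 - 2 = s 2 - 1)%nat by lia.
replace (INR 1 - 1 / INR 1)%R with 0%R by (simpl; field).
rewrite Rpower_O; last by apply: lt_0_INR; apply/ltP.
have -> : INR 1 = 1%R by [].
rewrite /Rdiv Rinv_1 !Rmult_1_r; exact: INR_leq.
Qed.

Lemma sum_le_INR (I : finType) (P : pred I) (F : I -> nat) (K : R) :
  (forall i, P i -> INR (F i) <= K)%R ->
  (INR (\sum_(i | P i) F i) <= INR (\sum_(i | P i) 1%nat) * K)%R.
Proof.
move=> h.
apply: (big_rec2 (fun x y => INR x <= INR y * K)%R).
  by rewrite /= Rmult_0_l; lra.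
move=> i y1 y2 Pi IH; rewrite !INR_addn /= Rmult_plus_distr_r Rmult_1_l.
have := h i Pi; lra.
Qed.

Lemma prod_pos (s : nat -> nat) a b :
  (forall i, (a <= i < b)%nat -> (0 < s i)%nat) -> (0 < \prod_(a <= i < b) s i)%nat.
Proof.
move=> h; rewrite big_nat_cond; apply: (big_ind (fun x => 0 < x)%nat) => //.
  by move=> x y hx hy; rewrite muln_gt0 hx hy.
by move=> i /andP [hi _]; apply: h.
Qed.

Lemma bin_le_exp n k : ('C(n, k) <= expn n k)%nat.
Proof.
apply: leq_trans (ffact_le_exp n k).
rewrite -bin_ffact; apply: leq_pmulr; exact: fact_gt0.
Qed.

Lemma kN_le n k : (muln k 'C(n, k) <= expn n k)%nat.
Proof.
apply: leq_trans (ffact_le_exp n k).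
rewrite -bin_ffact mulnC; apply: leq_mul => //; exact: fact_geq.
Qed.

Lemma ffact_le m s : (muln (s`!) 'C(m, s) <= expn m s)%nat.
Proof. by rewrite mulnC bin_ffact; exact: ffact_le_exp. Qed.

Lemma main_of_key k : (0 < k)%nat -> KeyP k -> MainP k.
Proof.
move=> k0 hK m n s E m0 n0 hs hE nc.
have s1p : (0 < s 1)%nat by apply: hs; lia.
have hc := count_main (m:=m) (n:=n) (k:=k) s1p hE.
set s1 := s 1%nat in s1p hc *.
set N := 'C(n, k) in hc *.
set X := (#|E| - (s1 - 1) * N)%nat in hc.
set Sg := (\sum_(2 <= i < k.+2) s i + 1 - k.+1)%nat.
set Q := (\prod_(2 <= i < k.+1) s i)%nat.
have Q0 : (0 < Q)%nat by apply: prod_pos => i hi; apply: hs; lia.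
set K := (INR Sg / INR k * Rpower (INR n) (INR k - 1 / INR Q))%R.
have kR : (1 <= INR k)%R by apply: INR_ge1.
have K0 : (0 <= K)%R.
  rewrite /K; apply: Rmult_le_pos; last by left; exact: exp_pos.
  rewrite /Rdiv; apply: Rmult_le_pos; first exact: pos_INR.
  left; apply: Rinv_0_lt_compat; lra.
have hLS : forall S : {set 'I_m}, #|S| == s1 -> (INR #|LS E S| <= K)%R.
  move=> S cS; apply: hK => //.
    move=> T; rewrite inE => /forallP hT.
    have : (0 < #|S|)%nat by rewrite (eqP cS).
    rewrite card_gt0 => /set0Pn [v vS].
    exact: (hE _ (implyP (hT v) vS)).
  by move=> hcp; apply: nc; exists S; split => //; exact/eqP.
have hsum := sum_le_INR hLS.
have cnt : (\sum_(S : {set 'I_m} | #|S| == s1) 1 = 'C(m, s1))%nat.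
  have := card_draws ('I_m) s1; rewrite card_ord => <-.
  by rewrite -sum1_card; apply: eq_bigl => S; rewrite inE.
rewrite cnt in hsum.
have h1 : (INR X ^ s1 <= INR N ^ (s1 - 1) * (INR m ^ s1 * K))%R.
  have := INR_leq hc; rewrite !INR_muln !INR_expn => h.
  apply: Rle_trans h _.
  rewrite Rmult_assoc; apply: Rmult_le_compat_l; first by apply: pow_le; exact: pos_INR.
  apply: Rle_trans (Rmult_le_compat_l _ _ _ (pos_INR _) hsum) _.
  rewrite -Rmult_assoc -INR_muln -INR_expn.
  apply: Rmult_le_compat_r => //; exact: INR_leq (ffact_le m s1).
have h2 : (INR k * INR N <= INR n ^ k)%R.
  by rewrite -INR_muln -INR_expn; apply: INR_leq; exact: kN_le.
have hQ : (1 <= INR Q)%R by apply: INR_ge1.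
have hm : (1 <= INR m)%R by apply: INR_ge1.
have hn : (1 <= INR n)%R by apply: INR_ge1.
have := real_step (pos_INR X) (pos_INR N) hm hn (pos_INR Sg) hQ k0 s1p h1 h2.
have -> : (\prod_(1 <= i < k.+1) s i = s1 * Q)%nat by rewrite big_ltn.
rewrite INR_muln => hX.
have eE : (#|E| <= X + (s1 - 1) * N)%nat by rewrite /X; lia.
apply: Rle_trans (INR_leq eE) _.
rewrite INR_addn INR_muln; lra.
Qed.

Lemma key_of_main k : (0 < k)%nat -> MainP k -> KeyP k.+1.
Proof.
move=> k0 hM n s L n0 hs hL nc.
have hs' : forall i, (1 <= i <= k.+1)%nat -> (0 < s i.+1)%nat.
  by move=> i hi; apply: hs; lia.
have hs2 : forall i, (2 <= i <= k.+2)%nat -> (1 <= s i)%nat.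
  by move=> i hi; apply: hs; lia.
have := hM n n (fun i => s i.+1) (EL L) n0 n0 hs' (EL_card2 hL) (EL_nocopy hs2 nc).
rewrite (EL_card hL) => h; cbv beta in h; move: h.
set Sg' := (\sum_(2 <= i < k.+2) s i.+1 + 1 - k.+1)%nat.
set Q := (\prod_(2 <= i < k.+2) s i)%nat.
have eQ : (\prod_(1 <= i < k.+1) s i.+1 = Q)%nat by rewrite /Q [RHS]big_add1.
rewrite eQ.
have sumge : (k <= \sum_(2 <= i < k.+2) s i.+1)%nat.
  have : (\sum_(2 <= i < k.+2) 1 <= \sum_(2 <= i < k.+2) s i.+1)%nat.
    rewrite big_nat_cond [X in (_ <= X)%nat]big_nat_cond.
    by apply: leq_sum => i /andP [hi _]; apply: hs'; lia.
  rewrite sum_nat_const_nat; lia.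
have eS : (\sum_(2 <= i < k.+3) s i + 1 - k.+2 = Sg' + (s 2 - 1))%nat.
  rewrite big_ltn // big_add1 /= /Sg'.
  have := hs 2 ltac:(lia); lia.
rewrite eS.
have Q0 : (0 < Q)%nat by apply: prod_pos => i hi; apply: hs; lia.
have hQ : (1 <= INR Q)%R by apply: INR_ge1.
have hn : (1 <= INR n)%R by apply: INR_ge1.
have kR : (1 <= INR k)%R by apply: INR_ge1.
set R1 := Rpower (INR n) (INR k.+1 - 1 / INR Q).
have eR1 : (INR n * Rpower (INR n) (INR k - 1 / INR Q) = R1)%R.
  rewrite /R1 S_INR -{1}(Rpower_1 (INR n)); last lra.
  rewrite -Rpower_plus; congr Rpower; ring.
have hC : (INR 'C(n, k) <= R1)%R.
  apply: Rle_trans (INR_leq (bin_le_exp n k)) _.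
  rewrite INR_expn -Rpower_pow; last lra.
  rewrite /R1; apply: Rle_Rpower => //.
  rewrite S_INR; have : (1 / INR Q <= 1)%R.
    rewrite /Rdiv Rmult_1_l -Rinv_1; apply: Rinv_le_contravar; lra.
  lra.
have hrt := rt_div_le Sg' (hs 2 ltac:(lia)) kR.
have R1p : (0 < R1)%R by exact: exp_pos.
set rr := rt _ _ in hrt *.
move=> h.
have h' : (INR k.+1 * INR #|L| <= INR Sg' * R1 + INR (s 2 - 1)%nat * R1)%R.
  rewrite -INR_muln; apply: Rle_trans h _.
  rewrite Rmult_assoc eR1.
  apply: Rplus_le_compat.
    by apply: Rmult_le_compat_r; lra.
  apply: Rmult_le_compat_l => //; exact: pos_INR.
have kR1 : (0 < INR k.+1)%R by rewrite S_INR; lra.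
rewrite INR_addn.
apply: (Rmult_le_reg_l (INR k.+1)) => //.
have -> : (INR k.+1 * ((INR Sg' + INR (s 2 - 1)%nat) / INR k.+1 * R1) =
          INR Sg' * R1 + INR (s 2 - 1)%nat * R1)%R by field; lra.
exact: h'.
Qed.

Lemma all_k k : (0 < k)%nat -> KeyP k /\ MainP k.
Proof.
elim: k => [//|k IH] _.
case: k IH => [|k] IH.
  by split; [exact: key1 | apply: main_of_key => //; exact: key1].
have [_ hM] := IH isT.
have hK := key_of_main (isT : (0 < k.+1)%nat) hM.
by split => //; apply: main_of_key.
Qed.

Unset Implicit Arguments.


Theorem proposition2p11 (r m n : nat) (s : nat -> nat) :
  3 <= r -> 1 <= s 1 -> (forall i, 1 <= i < r -> s i <= s i.+1) ->
  1 <= m -> 1 <= n ->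
  (INR (Zmax m n r s) <=
     Rpower (INR (\sum_(2 <= i < r.+1) s i + 1 - r)%nat) (1 / INR (s 1%nat))
       / INR (r - 1)%nat * INR m
       * Rpower (INR n) (INR (r - 1)%nat - 1 / INR (\prod_(1 <= i < r) s i)%nat)
     + INR (s 1%nat - 1)%nat * INR 'C(n, (r - 1)%nat))%R.
Proof.
case: r => [//|k] r3 s1 mono m1 n1.
have hs : forall i, (1 <= i <= k.+1)%nat -> (0 < s i)%nat.
  elim=> [//|i IH] hi.
  case: i IH hi => [|i] IH hi; first exact: s1.
  exact: leq_trans (IH ltac:(lia)) (mono i.+1 ltac:(lia)).
have [_ hM] := all_k (ltac:(lia) : (0 < k)%nat).
rewrite subSS subn0.
set B := (_ + _)%R.
have kR : (1 <= INR k)%R by apply: INR_ge1; lia.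
have B0 : (0 <= B)%R.
  rewrite /B; apply: Rplus_le_le_0_compat; last by apply: Rmult_le_pos; exact: pos_INR.
  apply: Rmult_le_pos; last by left; exact: exp_pos.
  apply: Rmult_le_pos; last exact: pos_INR.
  rewrite /Rdiv; apply: Rmult_le_pos; first by left; exact: exp_pos.
  left; apply: Rinv_0_lt_compat; lra.
rewrite /Zmax; apply: (big_ind (fun x => INR x <= B)%R) => //.
  move=> x y hx hy; rewrite /maxn; by case: ifP.
move=> H; rewrite /Zfree /pb; case: excluded_middle_informative => // -[hr [hsb nc]] _.
rewrite -(EH_card hsb).
have := hM m n s (EH H) m1 n1 hs (EH_card2 hr) (EH_nocopy n1 nc).
move=> h; apply: Rle_trans h _.
rewrite /B; apply: Rplus_le_compat_r.
have hR : (0 <= Rpower (INR n) (INR k - 1 / INR (\prod_(1 <= i < k.+1) s i)%nat))%R.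
  by left; exact: exp_pos.
apply: Rmult_le_compat_r => //.
apply: Rmult_le_compat_r; first exact: pos_INR.
rewrite /Rdiv; apply: Rmult_le_compat_r; first by left; apply: Rinv_0_lt_compat; lra.
exact: (proj2 (rt_le_Rpower _ _)).
Qed.
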